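(* Let $\mu_1,\mu_2>0$ and $0\le p<1$ with $\frac1{\mu_1}+\frac p{\mu_2}=1$, let $b\ge1$, $N\ge2$, $0<\alpha<0.5$, $\lambda=1-N^{-\alpha}$, $w_u=\max\{(1-p)\mu_1,\mu_2\}$, $w_l=\min\{(1-p)\mu_1,\mu_2\}$, $k=\left(1+\frac{w_u b}{w_l}\right)\left(\frac{1+\mu_1+\mu_2}{w_l}+2\mu_1\right)$. Let $$\mathcal S_{ssc_1}=\left\{s:\ s_1\ge \lambda+\left(\tfrac{1+\mu_1+\mu_2}{w_l}-\mu_1\right)\tfrac{\log N}{\sqrt N},\ s_{1,1}\ge \tfrac{\lambda}{\mu_1}-\tfrac{\log N}{\sqrt N},\ s_{1,2}\ge \tfrac{p\lambda}{\mu_2}-\tfrac{\mu_1\log N}{\sqrt N}\right\},$$ where for $s\in\mathbb R^{b\times2}$, $s_i=s_{i,1}+s_{i,2}$. Then for every $s\in\mathcal S_{ssc_1}$, $$\left(\lambda+\frac{\log N}{\sqrt N}-(1-p)\mu_1s_{1,1}-\mu_2s_{1,2}\right)\mathbb I_{\left\{\sum_{i=1}^b s_i>\lambda+\frac{k\log N}{\sqrt N}+\frac1N\right\}}\le 0.$$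
   Context: Here $s=(s_{i,m})_{1\le i\le b,\,m\in\{1,2\}}$ is a system state: $s_{i,m}$ is the fraction of servers (out of $N$) with at least $i$ jobs whose job in service is in phase $m$ of a Coxian-2 service distribution, so $s$ belongs to $\mathcal S^{(N)}=\{s: 1\ge s_{1,m}\ge\cdots\ge s_{b,m}\ge0,\ s_{1,1}+s_{1,2}\le1,\ Ns_{i,m}\in\mathbb N\}$. $\mathbb I$ denotes an indicator. *)

(* Defs.v *)
From Stdlib Require Import Reals.
Open Scope R_scope.

(* A state s is a function s i m (i in 1..b, m in {1,2}); only those
   indices are constrained/used. *)

Definition in_state_space (N b : nat) (s : nat -> nat -> R) : Prop :=
  (forall m : nat, (m = 1%nat \/ m = 2%nat) ->
     s 1%nat m <= 1 /\
     (forall i : nat, (1 <= i < b)%nat -> s (S i) m <= s i m) /\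
     0 <= s b m /\
     (forall i : nat, (1 <= i <= b)%nat -> exists n : nat, INR N * s i m = INR n))
  /\ s 1%nat 1%nat + s 1%nat 2%nat <= 1.

Definition s_tot (s : nat -> nat -> R) (i : nat) : R := s i 1%nat + s i 2%nat.

Definition sum_s (b : nat) (s : nat -> nat -> R) : R :=
  sum_f_R0 (fun j => s_tot s (S j)) (pred b).

Definition ind_gt (x y : R) : R := if Rlt_dec y x then 1 else 0.

(* Main.v *)
Require Import Defs.
From Stdlib Require Import Reals Lra Psatz.
Open Scope R_scope.

Theorem lemma4 (mu1 mu2 p alpha : R) (b N : nat) (s : nat -> nat -> R) :
  0 < mu1 -> 0 < mu2 -> 0 <= p -> p < 1 ->
  1 / mu1 + p / mu2 = 1 ->
  (1 <= b)%nat -> (2 <= N)%nat ->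
  0 < alpha -> alpha < 1 / 2 ->
  let lam := 1 - Rpower (INR N) (- alpha) in
  let wu := Rmax ((1 - p) * mu1) mu2 in
  let wl := Rmin ((1 - p) * mu1) mu2 in
  let k := (1 + wu * INR b / wl) * ((1 + mu1 + mu2) / wl + 2 * mu1) in
  let eps := ln (INR N) / sqrt (INR N) in
  in_state_space N b s ->
  s_tot s 1%nat >= lam + ((1 + mu1 + mu2) / wl - mu1) * eps ->
  s 1%nat 1%nat >= lam / mu1 - eps ->
  s 1%nat 2%nat >= p * lam / mu2 - mu1 * eps ->
  (lam + eps - (1 - p) * mu1 * s 1%nat 1%nat - mu2 * s 1%nat 2%nat)
    * ind_gt (sum_s b s) (lam + k * eps + 1 / INR N) <= 0.
Proof.
  intros H1 H2 H3 H4 H5 Hb HN Ha1 Ha2 lam wu wl k eps Hst Hs1 Hs11 Hs12.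
  assert (HNr : 1 <= INR N) by (apply (le_INR 1); lia).
  assert (Heps : 0 <= eps).
  { unfold eps. apply Rmult_le_pos.
    - rewrite <- ln_1. destruct (Req_dec (INR N) 1) as [E|E]; [rewrite E; lra| apply Rlt_le, ln_increasing; lra].
    - apply Rlt_le, Rinv_0_lt_compat, sqrt_lt_R0; lra. }
  assert (Hwl : 0 < wl) by (unfold wl; apply Rmin_glb_lt; nra).
  assert (Hwl1 : wl <= (1 - p) * mu1) by apply Rmin_l.
  assert (Hwl2 : wl <= mu2) by apply Rmin_r.
  assert (Hkey : mu2 + p * mu1 = mu1 * mu2).
  { assert (E: mu1 * mu2 * (1 / mu1 + p / mu2) = mu1 * mu2) by (rewrite H5; ring).
    rewrite <- E. field. lra. }
  assert (Hlam : lam / mu1 + p * lam / mu2 = lam).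
  { replace (lam / mu1 + p * lam / mu2) with (lam * (1 / mu1 + p / mu2)) by (field; lra).
    rewrite H5; ring. }
  set (C := 1 + mu1 + mu2) in *.
  assert (HC : C / wl * wl = C) by (field; lra).
  set (x := s 1%nat 1%nat - (lam / mu1 - eps)).
  set (y := s 1%nat 2%nat - (p * lam / mu2 - mu1 * eps)).
  assert (Hx : 0 <= x) by (unfold x; lra).
  assert (Hy : 0 <= y) by (unfold y; lra).
  assert (Hxy : x + y >= (C / wl + 1) * eps).
  { unfold x, y. unfold s_tot in Hs1.
    replace ((C / wl + 1) * eps) with (((C / wl - mu1) * eps) + eps + mu1 * eps) by ring.
    lra. }
  assert (HA : (1 - p) * mu1 * x >= wl * x) by nra.
  assert (HB : mu2 * y >= wl * y) by nra.
  assert (HW : wl * (x + y) >= (C + wl) * eps).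
  { replace ((C + wl) * eps) with (wl * ((C / wl + 1) * eps)).
    - apply Rmult_ge_compat_l; lra.
    - replace (wl * ((C / wl + 1) * eps)) with ((C / wl * wl + wl) * eps) by ring.
      rewrite HC; ring. }
  assert (Hf : lam + eps - (1 - p) * mu1 * s 1%nat 1%nat - mu2 * s 1%nat 2%nat <= 0).
  { assert (E1 : s 1%nat 1%nat = x + (lam / mu1 - eps)) by (unfold x; ring).
    assert (E2 : s 1%nat 2%nat = y + (p * lam / mu2 - mu1 * eps)) by (unfold y; ring).
    rewrite E1, E2.
    assert (E3 : (1 - p) * mu1 * (lam / mu1 - eps) + mu2 * (p * lam / mu2 - mu1 * eps)
              = lam - (1 - p) * mu1 * eps - mu1 * mu2 * eps).
    { rewrite <- Hlam. field. lra. }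
    unfold C in *. nra. }
  assert (Hi : 0 <= ind_gt (sum_s b s) (lam + k * eps + 1 / INR N)).
  { unfold ind_gt. destruct Rlt_dec; lra. }
  nra.
Qed.
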